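(* Let $g^{ij}(x)$ and $\Gamma^{ij}_k(x)$, $i,j,k=1,\dots,n$, be functions of coordinates $x^1,\dots,x^n$ which satisfy conditions (i)–(v) of the context (no non-degeneracy of $g$ assumed). Suppose that all components $g^{ij}$ and $\Gamma^{ij}_k$ depend linearly (i.e. affinely) on one coordinate $x^\bullet$, that is $\partial_\bullet^2g^{ij}=0$ and $\partial_\bullet^2\Gamma^{ij}_k=0$, where $\partial_\bullet=\partial/\partial x^\bullet$. Then for every constant $\lambda$ the pair $$\big(g^{ij}+\lambda\,\partial_\bullet g^{ij},\ \Gamma^{ij}_k+\lambda\,\partial_\bullet\Gamma^{ij}_k\big)$$ also satisfies conditions (i)–(v). Consequently the pairs $(g,\Gamma)$ and $(\partial_\bullet g,\partial_\bullet\Gamma)$ define compatible (possibly degenerate) Hamiltonian structures of hydrodynamic type, i.e. a bi-Hamiltonian structure.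
   Context: Conditions on a pair $(g^{ij},\Gamma^{ij}_k)$ (summation over repeated indices): (i) $g^{ij}=g^{ji}$; (ii) $\partial g^{ij}/\partial x^k=\Gamma^{ij}_k+\Gamma^{ji}_k$; (iii) $g^{ij}\Gamma^{rs}_i=g^{ri}\Gamma^{js}_i$; (iv) $\Gamma^{ij}_t\Gamma^{tk}_r-\Gamma^{ik}_t\Gamma^{tj}_r=g^{ti}\big(\partial\Gamma^{jk}_r/\partial x^t-\partial\Gamma^{jk}_t/\partial x^r\big)$; (v) $\sum_{\text{cyclic in }i,j,k}\Big[\big(\frac{\partial\Gamma^{ij}_t}{\partial x^q}-\frac{\partial\Gamma^{ij}_q}{\partial x^t}\big)\Gamma^{tk}_r+\big(\frac{\partial\Gamma^{ij}_t}{\partial x^r}-\frac{\partial\Gamma^{ij}_r}{\partial x^t}\big)\Gamma^{tk}_q\Big]=0$. These are necessary and sufficient for the bracket $\{x^i(\sigma),x^j(\sigma')\}=g^{ij}\delta'(\sigma-\sigma')+\Gamma^{ij}_kx^k_\sigma\delta(\sigma-\sigma')$ of fields $x^i(\sigma)$ to be Poisson (a ''Hamiltonian structure'', possibly degenerate). Two such structures are compatible if every linear combination $\{,\}_1+\lambda\{,\}_2$ is again a Hamiltonian structure. *)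

(* Defs.v *)
From HB Require Import structures.
From mathcomp Require Import all_boot all_order all_algebra.
From mathcomp Require Import all_classical all_reals all_analysis.
Set Implicit Arguments. Unset Strict Implicit. Unset Printing Implicit Defensive.
Import Order.TTheory GRing.Theory Num.Theory.
Import numFieldNormedType.Exports.
Local Open Scope ring_scope.

Section Defs.
Variables (R : realType) (n : nat).

Definition coord_vec (k : 'I_n) : 'rV[R]_n := delta_mx 0 k.

Definition pd (k : 'I_n) (f : 'rV[R]_n -> R) : 'rV[R]_n -> R :=
  fun x => derive f x (coord_vec k).

Definition iter_pd (s : seq 'I_n) (f : 'rV[R]_n -> R) : 'rV[R]_n -> R :=
  foldr pd f s.

Definition smooth (f : 'rV[R]_n -> R) : Prop :=
  forall s : seq 'I_n, continuous (iter_pd s f) /\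
    forall (k : 'I_n) (x : 'rV[R]_n), derivable (iter_pd s f) x (coord_vec k).

(* g i j = g^{ij},  G i j k = Gamma^{ij}_k *)
Definition hamiltonian_structure
    (g : 'I_n -> 'I_n -> 'rV[R]_n -> R)
    (G : 'I_n -> 'I_n -> 'I_n -> 'rV[R]_n -> R) : Prop :=
  forall x : 'rV[R]_n,
  (forall i j, g i j x = g j i x) /\
  (forall i j k, pd k (g i j) x = G i j k x + G j i k x) /\
  (forall j r s, \sum_(i < n) g i j x * G r s i x = \sum_(i < n) g r i x * G j s i x) /\
  (forall i j k r,
     \sum_(t < n) (G i j t x * G t k r x - G i k t x * G t j r x)
     = \sum_(t < n) g t i x * (pd t (G j k r) x - pd r (G j k t) x)) /\
  (forall i j k q r,
     let term a b c :=
       \sum_(t < n) ((pd q (G a b t) x - pd t (G a b q) x) * G t c r x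
                    + (pd r (G a b t) x - pd t (G a b r) x) * G t c q x) in
     term i j k + term j k i + term k i j = 0).

Definition pencil_g (lam : R) (g1 g2 : 'I_n -> 'I_n -> 'rV[R]_n -> R) :=
  fun i j x => g1 i j x + lam * g2 i j x.
Definition pencil_G (lam : R) (G1 G2 : 'I_n -> 'I_n -> 'I_n -> 'rV[R]_n -> R) :=
  fun i j k x => G1 i j k x + lam * G2 i j k x.

Definition compatible g1 G1 g2 G2 : Prop :=
  hamiltonian_structure g1 G1 /\ hamiltonian_structure g2 G2 /\
  forall lam : R, hamiltonian_structure (pencil_g lam g1 g2) (pencil_G lam G1 G2).

End Defs.

(* Main.v *)
Require Import Defs.
From HB Require Import structures.
From mathcomp Require Import all_boot all_order all_algebra.
From mathcomp Require Import all_classical all_reals all_analysis.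
From mathcomp Require Import ring lra.
Import Order.TTheory GRing.Theory Num.Theory.
Import numFieldNormedType.Exports.
Local Open Scope ring_scope.


Section S.
Variables (R : realType) (n : nat).
Implicit Types (f : 'rV[R]_n -> R).

Lemma pd_shift f a k x : pd k (fun y => f (a + y)) x = pd k f (a + x).
Proof.
rewrite /pd /derive.
have -> : (fun h : R => h^-1 *: (((fun y => f (a + y)) \o shift x) (h *: @coord_vec R n k) - f (a + x)))
  = (fun h : R => h^-1 *: ((f \o shift (a + x)) (h *: @coord_vec R n k) - f (a + x))).
  by apply/funext => h /=; rewrite addrCA.
by [].
Qed.

Lemma along_fun f (e x : 'rV[R]_n) (t : R) :
  (fun h : R => h^-1 *: (((fun s : R => f (s *: e + x)) \o shift t) (h *: (1:R)) - f (t *: e + x)))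
  = (fun h : R => h^-1 *: ((f \o shift (t *: e + x)) (h *: e) - f (t *: e + x))).
Proof.
apply/funext => h /=. by rewrite -[h%:A]/(h * 1) mulr1 scalerDl addrA.
Qed.

Lemma along_derive f (e x : 'rV[R]_n) (t : R) :
  derive (fun s : R => f (s *: e + x)) t 1 = derive f (t *: e + x) e.
Proof. by rewrite /derive along_fun. Qed.

Lemma along_derivable f (e x : 'rV[R]_n) (t : R) :
  derivable f (t *: e + x) e -> derivable (fun s : R => f (s *: e + x)) t 1.
Proof. by rewrite /derivable along_fun. Qed.

Lemma affine_shift f b :
  smooth f -> (forall x, pd b (pd b f) x = 0) ->
  forall l x, f (l *: @coord_vec R n b + x) = f x + l * pd b f x.
Proof.
move=> sf H2 l x.
set e := @coord_vec R n b.
set psi := fun s : R => pd b f (s *: e + x).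
have dpsi : forall s, is_derive s (1:R) psi 0.
  move=> s; split.
    apply: along_derivable. exact: ((sf [:: b]).2 b).
  by rewrite /psi along_derive -[derive (pd b f) _ _]/(pd b (pd b f) _) H2.
have cpsi : forall s, psi s = pd b f x.
  move=> s; rewrite (is_derive_0_is_cst (f:=psi) s 0 dpsi) /psi scale0r add0r //.
set c := pd b f x.
set h := (fun s : R => f (s *: e + x)) - (fun s => s * c).
have dh : forall s, is_derive s (1:R) h 0.
  move=> s.
  have d1 : is_derive s (1:R) (fun s : R => f (s *: e + x)) c.
    split; first by apply: along_derivable; exact: ((sf [::]).2 b).
    by rewrite along_derive; exact: (cpsi s).
  have d2 : is_derive s (1:R) (fun s : R => s * c) c.
    have -> : (fun s : R => s * c) = c \*: id.
      by apply/funext => y /=; rewrite mulrC.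
    have := @is_deriveZ R R R id c s 1 1 (is_derive_id s 1).
    by rewrite -[c%:A]/(c*1) mulr1.
  have := @is_deriveB R R R _ _ s 1 c c d1 d2.
  by rewrite subrr.
have := is_derive_0_is_cst (f:=h) l 0 dh.
move=> H.
have : f (l *: e + x) - l * c = f (0 *: e + x) - 0 * c := H.
rewrite scale0r add0r mul0r subr0 => <-.
by rewrite subrK.
Qed.

End S.


Section S2.
Variables (R : realType) (n : nat).

Lemma ham_shift (g : 'I_n -> 'I_n -> 'rV[R]_n -> R)
    (G : 'I_n -> 'I_n -> 'I_n -> 'rV[R]_n -> R) a :
  hamiltonian_structure g G ->
  hamiltonian_structure (fun i j x => g i j (a + x)) (fun i j k x => G i j k (a + x)).
Proof.
move=> H x; have [H1 [H2 [H3 [H4 H5]]]] := H (a + x).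
split; first by [].
split; first by move=> i j k; rewrite pd_shift.
split; first by [].
split.
  move=> i j k r; rewrite H4; apply: eq_bigr => t _.
  by rewrite !pd_shift.
move=> i j k q r; have := H5 i j k q r; cbv beta zeta => E.
apply: (etrans _ E).
by congr (_ + _ + _); apply: eq_bigr => t _; rewrite !pd_shift.
Qed.

Lemma top (P : R -> 'I_n -> R) (Z : 'I_n -> R) :
  (forall l, \sum_t P l t = 0) ->
  (forall t, P 1 t + P (-1) t - 2 * P 0 t = 2 * Z t) -> \sum_t Z t = 0.
Proof.
move=> HP HZ.
have E : 2 * \sum_t Z t = \sum_t P 1 t + \sum_t P (-1) t - 2 * \sum_t P 0 t.
  rewrite !mulr_sumr -big_split -sumrB /=; apply: eq_bigr => t _.
  by rewrite HZ.
move: E; rewrite !HP => E.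
have : 2 * \sum_t Z t = 0 by rewrite E; lra.
move/eqP; rewrite mulf_eq0 => /orP [|/eqP //].
by rewrite pnatr_eq0.
Qed.

End S2.


Lemma pd_lin (R : realType) (n : nat) (f h : 'rV[R]_n -> R) t (l : R) x :
  derivable f x (@coord_vec R n t) -> derivable h x (@coord_vec R n t) ->
  pd t (fun y => f y + l * h y) x = pd t f x + l * pd t h x.
Proof.
move=> df dh; rewrite /pd.
have -> : (fun y => f y + l * h y) = f + l \*: h by apply/funext.
by rewrite deriveD ?deriveZ //; apply: derivableZ.
Qed.

Lemma eq_sub0 (R : realType) (n : nat) (F1 F2 : 'I_n -> R) :
  \sum_t F1 t = \sum_t F2 t -> \sum_t (F1 t - F2 t) = 0.
Proof. by move=> E; rewrite sumrB E subrr. Qed.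

Lemma eq_3 (R : realType) (n : nat) (A B C : 'I_n -> R) :
  \sum_t A t + \sum_t B t + \sum_t C t = 0 -> \sum_t (A t + B t + C t) = 0.
Proof. by move=> E; rewrite !big_split. Qed.

Lemma alg4 (R : comRingType) (a a' c c' d d' e e' h h' p p' q q' : R) :
  ((a + 1 * a') * (c + 1 * c') - (d + 1 * d') * (e + 1 * e') - (h + 1 * h') * ((p + 1 * p') - (q + 1 * q'))) + ((a + (-1) * a') * (c + (-1) * c') - (d + (-1) * d') * (e + (-1) * e') - (h + (-1) * h') * ((p + (-1) * p') - (q + (-1) * q'))) - 2 * ((a + 0 * a') * (c + 0 * c') - (d + 0 * d') * (e + 0 * e') - (h + 0 * h') * ((p + 0 * p') - (q + 0 * q'))) = 2 * (a' * c' - d' * e' - h' * (p' - q')).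
Proof. ring. Qed.

Lemma alg5 (R : comRingType) (x1 x1' x2 x2' x3 x3' x4 x4' x5 x5' x6 x6' y1 y1' y2 y2' y3 y3' y4 y4' y5 y5' y6 y6' z1 z1' z2 z2' z3 z3' z4 z4' z5 z5' z6 z6' : R) :
  ((((x1 + 1 * x1') - (x2 + 1 * x2')) * (x3 + 1 * x3') + ((x4 + 1 * x4') - (x5 + 1 * x5')) * (x6 + 1 * x6')) + (((y1 + 1 * y1') - (y2 + 1 * y2')) * (y3 + 1 * y3') + ((y4 + 1 * y4') - (y5 + 1 * y5')) * (y6 + 1 * y6')) + (((z1 + 1 * z1') - (z2 + 1 * z2')) * (z3 + 1 * z3') + ((z4 + 1 * z4') - (z5 + 1 * z5')) * (z6 + 1 * z6'))) + ((((x1 + (-1) * x1') - (x2 + (-1) * x2')) * (x3 + (-1) * x3') + ((x4 + (-1) * x4') - (x5 + (-1) * x5')) * (x6 + (-1) * x6')) + (((y1 + (-1) * y1') - (y2 + (-1) * y2')) * (y3 + (-1) * y3') + ((y4 + (-1) * y4') - (y5 + (-1) * y5')) * (y6 + (-1) * y6')) + (((z1 + (-1) * z1') - (z2 + (-1) * z2')) * (z3 + (-1) * z3') + ((z4 + (-1) * z4') - (z5 + (-1) * z5')) * (z6 + (-1) * z6'))) - 2 * ((((x1 + 0 * x1') - (x2 + 0 * x2')) * (x3 + 0 * x3') + ((x4 + 0 * x4') - (x5 + 0 * x5')) * (x6 + 0 * x6')) + (((y1 + 0 * y1') - (y2 + 0 * y2')) * (y3 + 0 * y3') + ((y4 + 0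 * y4') - (y5 + 0 * y5')) * (y6 + 0 * y6')) + (((z1 + 0 * z1') - (z2 + 0 * z2')) * (z3 + 0 * z3') + ((z4 + 0 * z4') - (z5 + 0 * z5')) * (z6 + 0 * z6'))) = 2 * (((x1' - x2') * x3' + (x4' - x5') * x6') + ((y1' - y2') * y3' + (y4' - y5') * y6') + ((z1' - z2') * z3' + (z4' - z5') * z6')).
Proof. ring. Qed.

Definition pen (R : realType) (n : nat) (b : 'I_n) (l : R) (f : 'rV[R]_n -> R)
  : 'rV[R]_n -> R := locked (fun y => f y + l * pd b f y).
Arguments pen {R n} b l f.

Lemma penE (R : realType) (n : nat) (b : 'I_n) (l : R) (f : 'rV[R]_n -> R) y :
  pen b l f y = f y + l * pd b f y.
Proof. by rewrite /pen -lock. Qed.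
Lemma alg5h (R : comRingType) (ax1 ax1' ax2 ax2' ax3 ax3' ax4 ax4' ax5 ax5' ax6 ax6' ay1 ay1' ay2 ay2' ay3 ay3' ay4 ay4' ay5 ay5' ay6 ay6' az1 az1' az2 az2' az3 az3' az4 az4' az5 az5' az6 az6' : R) (ux11 ux1m ux10 ux21 ux2m ux20 ux31 ux3m ux30 ux41 ux4m ux40 ux51 ux5m ux50 ux61 ux6m ux60 uy11 uy1m uy10 uy21 uy2m uy20 uy31 uy3m uy30 uy41 uy4m uy40 uy51 uy5m uy50 uy61 uy6m uy60 uz11 uz1m uz10 uz21 uz2m uz20 uz31 uz3m uz30 uz41 uz4m uz40 uz51 uz5m uz50 uz61 uz6m uz60 : R) :
  ux11 = ax1 + 1 * ax1' ->
  ux1m = ax1 + (-1) * ax1' ->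
  ux10 = ax1 + 0 * ax1' ->
  ux21 = ax2 + 1 * ax2' ->
  ux2m = ax2 + (-1) * ax2' ->
  ux20 = ax2 + 0 * ax2' ->
  ux31 = ax3 + 1 * ax3' ->
  ux3m = ax3 + (-1) * ax3' ->
  ux30 = ax3 + 0 * ax3' ->
  ux41 = ax4 + 1 * ax4' ->
  ux4m = ax4 + (-1) * ax4' ->
  ux40 = ax4 + 0 * ax4' ->
  ux51 = ax5 + 1 * ax5' ->
  ux5m = ax5 + (-1) * ax5' ->
  ux50 = ax5 + 0 * ax5' ->
  ux61 = ax6 + 1 * ax6' ->
  ux6m = ax6 + (-1) * ax6' ->
  ux60 = ax6 + 0 * ax6' ->
  uy11 = ay1 + 1 * ay1' ->
  uy1m = ay1 + (-1) * ay1' ->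
  uy10 = ay1 + 0 * ay1' ->
  uy21 = ay2 + 1 * ay2' ->
  uy2m = ay2 + (-1) * ay2' ->
  uy20 = ay2 + 0 * ay2' ->
  uy31 = ay3 + 1 * ay3' ->
  uy3m = ay3 + (-1) * ay3' ->
  uy30 = ay3 + 0 * ay3' ->
  uy41 = ay4 + 1 * ay4' ->
  uy4m = ay4 + (-1) * ay4' ->
  uy40 = ay4 + 0 * ay4' ->
  uy51 = ay5 + 1 * ay5' ->
  uy5m = ay5 + (-1) * ay5' ->
  uy50 = ay5 + 0 * ay5' ->
  uy61 = ay6 + 1 * ay6' ->
  uy6m = ay6 + (-1) * ay6' ->
  uy60 = ay6 + 0 * ay6' ->
  uz11 = az1 + 1 * az1' ->
  uz1m = az1 + (-1) * az1' ->
  uz10 = az1 + 0 * az1' ->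
  uz21 = az2 + 1 * az2' ->
  uz2m = az2 + (-1) * az2' ->
  uz20 = az2 + 0 * az2' ->
  uz31 = az3 + 1 * az3' ->
  uz3m = az3 + (-1) * az3' ->
  uz30 = az3 + 0 * az3' ->
  uz41 = az4 + 1 * az4' ->
  uz4m = az4 + (-1) * az4' ->
  uz40 = az4 + 0 * az4' ->
  uz51 = az5 + 1 * az5' ->
  uz5m = az5 + (-1) * az5' ->
  uz50 = az5 + 0 * az5' ->
  uz61 = az6 + 1 * az6' ->
  uz6m = az6 + (-1) * az6' ->
  uz60 = az6 + 0 * az6' ->
  (((ux11 - ux21) * ux31 + (ux41 - ux51) * ux61) + ((uy11 - uy21) * uy31 + (uy41 - uy51) * uy61) + ((uz11 - uz21) * uz31 + (uz41 - uz51) * uz61)) + (((ux1m - ux2m) * ux3m + (ux4m - ux5m) * ux6m) + ((uy1m - uy2m) * uy3m + (uy4m - uy5m) * uy6m) + ((uz1m - uz2m) * uz3m + (uz4m - uz5m) * uz6m)) - 2 * (((ux10 - ux20) * ux30 + (ux40 - ux50) * ux60) + ((uy10 - uy20) * uy30 + (uy40 - uy50) * uy60) + ((uz10 - uz20) * uz30 + (uz40 - uz50) * uz60)) = 2 * (((ax1' - ax2') * ax3' + (ax4' - ax5') * ax6') + ((ay1' - ay2') * ay3' + (ay4' - ay5') * ay6') + ((az1' - az2') * az3' + (az4' - az5') * az6')).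
Proof. by do 54 (move=> ->); ring. Qed.

Theorem lemma8 (R : realType) (n : nat)
    (g : 'I_n -> 'I_n -> 'rV[R]_n -> R)
    (G : 'I_n -> 'I_n -> 'I_n -> 'rV[R]_n -> R)
    (b : 'I_n)
    (g_smooth : forall i j, smooth (g i j))
    (G_smooth : forall i j k, smooth (G i j k))
    (HS : hamiltonian_structure g G)
    (g_lin : forall i j x, pd b (pd b (g i j)) x = 0)
    (G_lin : forall i j k x, pd b (pd b (G i j k)) x = 0) :
  (forall lam : R,
     hamiltonian_structure
       (fun i j x => g i j x + lam * pd b (g i j) x)
       (fun i j k x => G i j k x + lam * pd b (G i j k) x)) /\
  compatible g G (fun i j => pd b (g i j)) (fun i j k => pd b (G i j k)).
Proof.
have HP : forall lam : R,
     hamiltonian_structure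
       (fun i j x => g i j x + lam * pd b (g i j) x)
       (fun i j k x => G i j k x + lam * pd b (G i j k) x).
  move=> lam.
  have -> : (fun i j x => g i j x + lam * pd b (g i j) x)
          = (fun i j x => g i j (lam *: @coord_vec R n b + x)).
    apply/funext => i; apply/funext => j; apply/funext => x.
    by rewrite affine_shift.
  have -> : (fun i j k x => G i j k x + lam * pd b (G i j k) x)
          = (fun i j k x => G i j k (lam *: @coord_vec R n b + x)).
    apply/funext => i; apply/funext => j; apply/funext => k; apply/funext => x.
    by rewrite affine_shift.
  exact: ham_shift.
split; first exact: HP.
split; first exact: HS.
split; last exact: HP.
have pdG : forall i j k t l x, pd t (fun y => G i j k y + l * pd b (G i j k) y) x
    = pd t (G i j k) x + l * pd t (pd b (G i j k)) x.
  move=> i j k t l x; apply: pd_lin.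
    exact: ((G_smooth i j k [::]).2 t x).
  exact: ((G_smooth i j k [:: b]).2 t x).
have pdg : forall i j t l x, pd t (fun y => g i j y + l * pd b (g i j) y) x
    = pd t (g i j) x + l * pd t (pd b (g i j)) x.
  move=> i j t l x; apply: pd_lin.
    exact: ((g_smooth i j [::]).2 t x).
  exact: ((g_smooth i j [:: b]).2 t x).
have HP' : forall l : R, hamiltonian_structure (fun i j => pen b l (g i j))
    (fun i j k => pen b l (G i j k)).
  move=> l.
  have -> : (fun i j => pen b l (g i j)) = (fun i j x => g i j x + l * pd b (g i j) x).
    by apply/funext => i; apply/funext => j; apply/funext => y; rewrite penE.
  have -> : (fun i j k => pen b l (G i j k)) = (fun i j k x => G i j k x + l * pd b (G i j k) x).
    by apply/funext => i; apply/funext => j; apply/funext => k; apply/funext => y; rewrite penE.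
  exact: HP.
have pdG' : forall i j k t l x, pd t (pen b l (G i j k)) x
    = pd t (G i j k) x + l * pd t (pd b (G i j k)) x.
  by move=> i j k t l x; rewrite /pen -lock; exact: pdG.
move=> x.
have [H1 [H2 [H3 [H4 H5]]]] := HS x.
split.
  move=> i j; have [E _] := HP 1 x; have := E i j; rewrite H1 !mul1r; lra.
split.
  move=> i j k; have [_ [E _]] := HP 1 x; have := E i j k.
  rewrite pdg H2 !mul1r; lra.
split.
  move=> j r s; apply/eqP; rewrite -subr_eq0 -sumrB; apply/eqP.
  apply: (@top R n _ _ (fun l => @eq_sub0 _ _ _ _ (proj1 (proj2 (proj2 (HP l x))) j r s))).
  move=> t /=; ring.
split.
  move=> i j k r; apply/eqP; rewrite -subr_eq0 -sumrB; apply/eqP.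
  apply: (@top R n _ _ (fun l => @eq_sub0 _ _ _ _ (proj1 (proj2 (proj2 (proj2 (HP l x)))) i j k r))).
  move=> t; cbv beta.
  rewrite !pdG.
  exact: alg4.
move=> i j k q r; cbv beta zeta; rewrite -!big_split.
apply: (@top R n _ _ (fun l => @eq_3 _ _ _ _ _ (proj2 (proj2 (proj2 (proj2 (HP' l x)))) i j k q r))).
move=> t; cbv beta.
eapply alg5h; first [exact: pdG' | exact: penE].
Qed.
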